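(* Let $k$ be a positive integer. If $v,w\in V$ lie in the same connected component of $\mathcal F_k$, then $\phi_k(v)=\phi_k(w)$.
   Context: The vertex set $V$ consists of all reduced fractions $p/q$ with $p,q\in\mathbb Z$, $\gcd(p,q)=1$, together with $1/0$; here $p/q$ and $(-p)/(-q)$ denote the same vertex. For vertices define $d(p/q,a/b)=|pb-qa|$. The graph $\mathcal F_k$ has vertex set $V$, with an edge between $p/q$ and $a/b$ exactly when $d(p/q,a/b)=k$. An element $(a,b)\in(\mathbb Z/k\mathbb Z)^2$ is admissible if for $\lambda\in\mathbb Z/k\mathbb Z$, $(\lambda a,\lambda b)=0$ implies $\lambda=0$; $\mathcal L_k$ is the set of admissible elements modulo $v\sim\lambda v$ for units $\lambda\in(\mathbb Z/k\mathbb Z)^*$; $\phi_k:V\to\mathcal L_k$ sends $p/q$ to the class of $(p\bmod k,q\bmod k)$. *)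

(* Defs.v *)
From Stdlib Require Import ZArith Relations.
Open Scope Z_scope.

(* A representative of a vertex p/q: a pair (p,q) of coprime integers
   (this includes 1/0 = (1,0) and (-1,0)). *)
Definition is_vertex (v : Z * Z) : Prop := Z.gcd (fst v) (snd v) = 1.

(* p/q and (-p)/(-q) denote the same vertex. *)
Definition same_vertex (v w : Z * Z) : Prop :=
  w = v \/ w = (- fst v, - snd v).

(* d(p/q, a/b) = |pb - qa| (independent of the sign representative). *)
Definition dist (v w : Z * Z) : Z :=
  Z.abs (fst v * snd w - snd v * fst w).

Definition edgeF (k : Z) (v w : Z * Z) : Prop :=
  is_vertex v /\ is_vertex w /\ dist v w = k.

(* One step in F_k on representatives: either an edge, or a change of
   representative of the same vertex. *)
Definition stepF (k : Z) (v w : Z * Z) : Prop :=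
  is_vertex v /\ is_vertex w /\ (edgeF k v w \/ same_vertex v w).

Definition connectedF (k : Z) (v w : Z * Z) : Prop :=
  clos_refl_trans (Z * Z) (stepF k) v w.

(* Z/kZ is modelled by Z with congruence mod k. *)
Definition eqmod (k a b : Z) : Prop := a mod k = b mod k.

Definition unit_mod (k l : Z) : Prop := exists m, eqmod k (l * m) 1.

Definition admissible (k : Z) (x : Z * Z) : Prop :=
  forall l, eqmod k (l * fst x) 0 -> eqmod k (l * snd x) 0 -> eqmod k l 0.

(* equality of classes in L_k: x ~ y iff x = l y for a unit l of Z/kZ *)
Definition L_equiv (k : Z) (x y : Z * Z) : Prop :=
  exists l, unit_mod k l /\ eqmod k (fst x) (l * fst y) /\ eqmod k (snd x) (l * snd y).

Definition phi (k : Z) (v : Z * Z) : Z * Z := (fst v mod k, snd v mod k).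

(* Main.v *)
Require Import Defs.
From Stdlib Require Import ZArith Relations Znumtheory Lia.
Open Scope Z_scope.

Definition Rk (k : Z) (v w : Z * Z) : Prop :=
  exists l, (exists m, (k | l * m - 1)) /\ (k | fst v - l * fst w) /\ (k | snd v - l * snd w).

Lemma dv_lin (k a b x y e : Z) : (k | a) -> (k | b) -> e = x * a + y * b -> (k | e).
Proof. intros Ha Hb ->. apply Z.divide_add_r; apply Z.divide_mul_r; assumption. Qed.

Lemma Rk_refl k v : Rk k v v.
Proof.
  exists 1. split; [exists 1|split]; apply (dv_lin k 0 0 0 0); try apply Z.divide_0_r; ring.
Qed.

Lemma Rk_sym k v w : Rk k v w -> Rk k w v.
Proof.
  intros [l [[m Hm] [H1 H2]]]. exists m. split; [exists l|split].
  - apply (dv_lin k _ _ 1 0 _ Hm Hm); ring.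
  - apply (dv_lin k _ _ (-m) (- fst w) _ H1 Hm); ring.
  - apply (dv_lin k _ _ (-m) (- snd w) _ H2 Hm); ring.
Qed.

Lemma Rk_trans k u v w : Rk k u v -> Rk k v w -> Rk k u w.
Proof.
  intros [l [[m Hm] [H1 H2]]] [l' [[m' Hm'] [H1' H2']]]. exists (l * l').
  split; [exists (m * m')|split].
  - apply (dv_lin k _ _ (l' * m') 1 _ Hm Hm'); ring.
  - apply (dv_lin k _ _ 1 l _ H1 H1'); ring.
  - apply (dv_lin k _ _ 1 l _ H2 H2'); ring.
Qed.

Lemma bez (p q : Z) : Z.gcd p q = 1 -> exists x y, p * x + q * y = 1.
Proof.
  intros H. destruct (Zis_gcd_bezout p q 1) as [u v Huv].
  rewrite <- H. apply Zgcd_is_gcd. exists u, v. lia.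
Qed.

Lemma Rk_edge k v w : is_vertex v -> is_vertex w -> (k | fst v * snd w - snd v * fst w) -> Rk k v w.
Proof.
  destruct v as [p q], w as [a b]; unfold is_vertex; simpl.
  intros Hv Hw D.
  destruct (bez _ _ Hw) as [x [y Hxy]].
  destruct (bez _ _ Hv) as [x' [y' Hxy']].
  set (l := p * x + q * y). set (m := a * x' + b * y').
  assert (E1 : (k | p - l * a)) by (apply (dv_lin k _ 0 y 0 _ D (Z.divide_0_r k)); subst l; rewrite <- (Z.mul_1_r p) at 1; rewrite <- Hxy; ring).
  assert (E2 : (k | q - l * b)) by (apply (dv_lin k _ 0 (-x) 0 _ D (Z.divide_0_r k)); subst l; rewrite <- (Z.mul_1_r q) at 1; rewrite <- Hxy; ring).
  assert (F1 : (k | a - m * p)) by (apply (dv_lin k _ 0 (-y') 0 _ D (Z.divide_0_r k)); subst m; rewrite <- (Z.mul_1_r a) at 1; rewrite <- Hxy'; ring).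
  assert (F2 : (k | b - m * q)) by (apply (dv_lin k _ 0 x' 0 _ D (Z.divide_0_r k)); subst m; rewrite <- (Z.mul_1_r b) at 1; rewrite <- Hxy'; ring).
  assert (G1 : (k | p - l * m * p)) by (apply (dv_lin k _ _ 1 l _ E1 F1); ring).
  assert (G2 : (k | q - l * m * q)) by (apply (dv_lin k _ _ 1 l _ E2 F2); ring).
  exists l. split; [exists m|split]; simpl; auto.
  apply (dv_lin k _ _ (-x') (-y') _ G1 G2). simpl. replace (l * m - 1) with ((l * m - 1) * (p * x' + q * y')) by (rewrite Hxy'; ring). ring.
Qed.

Lemma Rk_step k v w : stepF k v w -> Rk k v w.
Proof.
  intros [Hv [Hw [[_ [_ Hd]] | [-> | ->]]]].
  - apply Rk_edge; auto. unfold dist in Hd. rewrite <- Hd.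
    apply Z.divide_abs_l. apply Z.divide_refl.
  - apply Rk_refl.
  - exists (-1). split; [exists (-1)|split]; cbn [fst snd];
    (apply (dv_lin k 0 0 0 0); [apply Z.divide_0_r|apply Z.divide_0_r|ring]).
Qed.

Lemma dv_mod k x y : 0 < k -> (k | x - y) -> x mod k = y mod k.
Proof.
  intros hk [c Hc]. replace x with (y + c * k) by lia. apply Z_mod_plus_full.
Qed.

Theorem lemma4p1 (k : Z) (hk : 0 < k) (v w : Z * Z) :
  is_vertex v -> is_vertex w -> connectedF k v w ->
  L_equiv k (phi k v) (phi k w).
Proof.
  intros _ _ H.
  assert (R : Rk k w v).
  { apply Rk_sym. unfold connectedF in H. induction H.
    - now apply Rk_step.
    - apply Rk_refl.
    - eapply Rk_trans; eauto. }
  apply Rk_sym in R.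
  destruct R as [l [[m Hm] [H1 H2]]].
  exists l. unfold unit_mod, eqmod, phi; simpl.
  assert (kn : k <> 0) by lia.
  split; [exists m|split].
  - apply dv_mod; auto.
  - rewrite Z.mod_mod, Z.mul_mod_idemp_r by auto. apply dv_mod; auto.
  - rewrite Z.mod_mod, Z.mul_mod_idemp_r by auto. apply dv_mod; auto.
Qed.
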